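(* Let $r\geqslant 3$ be an odd integer and let $\Gamma\cong\mathbb{Z}_{2r}\oplus\mathbb{Z}_8$. Then there exists an $\mathrm{MRS}_\Gamma(r,8;2)$ in which every row sum and every column sum equals $0_\Gamma$.
   Context: For an abelian group $\Gamma$ of order $abc$, an $\mathrm{MRS}_\Gamma(a,b;c)$ is a collection of $c$ arrays of size $a\times b$ whose entries are the elements of $\Gamma$, each appearing exactly once and in a unique array, such that there are $\omega,\delta\in\Gamma$ with every row sum (in every array) equal to $\omega$ and every column sum (in every array) equal to $\delta$. *)

(* Defs.v *)
From HB Require Import structures.
From mathcomp Require Import all_boot all_order all_algebra.
Set Implicit Arguments. Unset Strict Implicit. Unset Printing Implicit Defensive.
Import GRing.Theory.
Local Open Scope ring_scope.

(* An MRS_G(a,b;c): c arrays A k (k < c) of size a x b with entries in the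
   finite abelian group G, such that every element of G appears exactly once
   among all entries of all arrays (the entry map is a bijection from
   positions to G), with every row sum equal to omega and every column sum
   equal to delta. *)
Definition is_MRS (G : zmodType) (a b c : nat)
    (A : 'I_c -> 'M[G]_(a, b)) (omega delta : G) : Prop :=
  bijective (fun p : 'I_c * ('I_a * 'I_b) => A p.1 p.2.1 p.2.2) /\
  (forall (k : 'I_c) (i : 'I_a), \sum_(j < b) A k i j = omega) /\
  (forall (k : 'I_c) (j : 'I_b), \sum_(i < a) A k i j = delta).

Definition MRS (G : zmodType) (a b c : nat) (A : 'I_c -> 'M[G]_(a, b)) : Prop :=
  exists omega delta : G, is_MRS A omega delta.

(* Main.v *)
Require Import Defs.
From HB Require Import structures.
From mathcomp Require Import all_boot all_order all_algebra.
Local Open Scope ring_scope.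
From mathcomp Require Import zify.
Import GRing.Theory.

Lemma sum_pair (G1 G2 : zmodType) n (F : 'I_n -> (G1 * G2)%type) :
  \sum_(i<n) F i = (\sum_(i<n) (F i).1, \sum_(i<n) (F i).2).
Proof. by elim/big_rec3: _ => //= i x y z _ ->. Qed.

Local Open Scope nat_scope.

Definition Tt := [:: [:: 1; 1; 0; 0; 1; 0; 1; 0; 0; 1; 0; 0; 1; 1; 0; 1];
 [:: 0; 0; 0; 1; 0; 1; 1; 1; 0; 0; 0; 0; 1; 1; 1; 1];
 [:: 1; 1; 0; 1; 1; 1; 0; 1; 0; 1; 0; 0; 0; 0; 1; 0];
 [:: 0; 0; 0; 1; 0; 1; 1; 1; 0; 0; 0; 0; 1; 1; 1; 1];
 [:: 0; 0; 0; 1; 0; 1; 1; 1; 0; 0; 0; 0; 1; 1; 1; 1] ].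
Definition Yt := [:: [:: 6; 1; 3; 2; 7; 5; 0; 0; 6; 5; 7; 1; 4; 2; 4; 3];
 [:: 0; 1; 7; 2; 4; 0; 3; 7; 2; 3; 5; 6; 1; 4; 5; 6];
 [:: 2; 6; 6; 4; 5; 3; 5; 1; 0; 0; 4; 1; 3; 2; 7; 7];
 [:: 0; 1; 7; 2; 4; 0; 3; 7; 2; 3; 5; 6; 1; 4; 5; 6];
 [:: 0; 7; 1; 6; 4; 0; 5; 1; 6; 5; 3; 2; 7; 4; 3; 2] ].
Definition St := [:: true; true; true; true; false; false; false; false; true; false; false; true; false; true; false; true].

Definition tv c p := nth 0 (nth [::] Tt c) p.
Definition yv c p := nth 0 (nth [::] Yt c) p.
Definition sv p := nth false St p.
Definition mir c := nth 0 [:: 0; 2; 1; 4; 3] c.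
Definition cl m i := if i == 0 then 0 else if i == 1 then 1
  else if i == 2* m then 2 else if i <= m then 3 else 4.
Definition Xn m k i j := (if sv (8*k+j) then 2*i else 2*(2* m+1-i))
  + (2* m+1) * tv (cl m i) (8*k+j).
Definition Yn m k i j := yv (cl m i) (8*k+j).
Definition rs (F : nat -> nat) := F 0 + F 1 + F 2 + F 3 + F 4 + F 5 + F 6 + F 7.

Lemma sum8 (F : nat -> nat) : \sum_(j < 8) F j = rs F.
Proof. by rewrite !big_ord_recr big_ord0 /= /rs add0n. Qed.

Lemma inI n x : (x \in iota 0 n) = (x < n).
Proof. by rewrite mem_iota. Qed.

Lemma fin1 c p1 p2 : c < 5 -> p1 < 16 -> p2 < 16 ->
  tv c p1 = tv c p2 -> yv c p1 = yv c p2 -> p1 = p2.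
Proof.
have H : all (fun c => all (fun p1 => all (fun p2 =>
   (tv c p1 == tv c p2) && (yv c p1 == yv c p2) ==> (p1 == p2))
   (iota 0 16)) (iota 0 16)) (iota 0 5) by vm_compute.
move=> hc h1 h2 e1 e2.
move/allP: H => /(_ c); rewrite inI => /(_ hc) /allP /(_ p1); rewrite inI.
move=> /(_ h1) /allP /(_ p2); rewrite inI => /(_ h2).
by rewrite e1 e2 !eqxx => /eqP.
Qed.

Lemma fin2 c p1 p2 : c < 5 -> p1 < 16 -> p2 < 16 ->
  tv c p1 = tv (mir c) p2 -> yv c p1 = yv (mir c) p2 -> sv p1 = sv p2.
Proof.
have H : all (fun c => all (fun p1 => all (fun p2 =>
   (tv c p1 == tv (mir c) p2) && (yv c p1 == yv (mir c) p2) ==> (sv p1 == sv p2))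
   (iota 0 16)) (iota 0 16)) (iota 0 5) by vm_compute.
move=> hc h1 h2 e1 e2.
move/allP: H => /(_ c); rewrite inI => /(_ hc) /allP /(_ p1); rewrite inI.
move=> /(_ h1) /allP /(_ p2); rewrite inI => /(_ h2).
by rewrite e1 e2 !eqxx => /eqP.
Qed.

Lemma fin3 c p : c < 5 -> p < 16 -> tv c p < 2 /\ yv c p < 8.
Proof.
have H : all (fun c => all (fun p => (tv c p < 2) && (yv c p < 8))
   (iota 0 16)) (iota 0 5) by vm_compute.
move=> hc hp.
move/allP: H => /(_ c); rewrite inI => /(_ hc) /allP /(_ p); rewrite inI.
by move=> /(_ hp) /andP.
Qed.

Lemma fin4 c k : c < 5 -> k < 2 ->
  ~~ odd (rs (fun j => tv c (8*k+j))) /\ 8 %| rs (fun j => yv c (8*k+j)).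
Proof.
have H : all (fun c => all (fun k =>
   ~~ odd (rs (fun j => tv c (8*k+j))) && (8 %| rs (fun j => yv c (8*k+j))))
   (iota 0 2)) (iota 0 5) by vm_compute.
move=> hc hp.
move/allP: H => /(_ c); rewrite inI => /(_ hc) /allP /(_ k); rewrite inI.
by move=> /(_ hp) /andP.
Qed.

Lemma fin5 p : p < 16 ->
  [/\ ~~ odd (tv 0 p + tv 1 p + tv 2 p), tv 3 p = tv 4 p,
      8 %| yv 0 p + yv 1 p + yv 2 p & 8 %| yv 3 p + yv 4 p].
Proof.
have H : all (fun p => [&& ~~ odd (tv 0 p + tv 1 p + tv 2 p), tv 3 p == tv 4 p,
      8 %| yv 0 p + yv 1 p + yv 2 p & 8 %| yv 3 p + yv 4 p])
   (iota 0 16) by vm_compute.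
move=> hp.
move/allP: H => /(_ p); rewrite inI => /(_ hp) /and4P [a /eqP b c d].
by split.
Qed.

Lemma fin6 k A B : k < 2 -> rs (fun j => if sv (8*k+j) then A else B) = 4*A + 4*B.
Proof. by case: k => [|[|]] //= _; rewrite /rs /=; lia. Qed.

Lemma cl_lt m i : cl m i < 5.
Proof. by rewrite /cl; repeat case: ifP. Qed.

Lemma mir_lt c : c < 5 -> mir (mir c) = c.
Proof. by case: c => [|[|[|[|[|]]]]]. Qed.

Lemma cl_mir m i : 0 < m -> i < 2* m+1 ->
  cl m ((2* m+1 - i) %% (2* m+1)) = mir (cl m i).
Proof.
move=> hm hi.
have [->|i0] := eqVneq i 0.
  by rewrite subn0 modnn.
rewrite modn_small; last lia.
rewrite /cl; repeat (case: ifP => ?); rewrite //=; lia.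
Qed.

Lemma N1 r a b t1 t2 : odd r -> a < r -> b < r -> t1 < 2 -> t2 < 2 ->
  (2*a + r*t1) %% (2*r) = (2*b + r*t2) %% (2*r) -> a = b /\ t1 = t2.
Proof.
move=> hr ha hb ht1 ht2 E.
have E2 : (2*a + r*t1) %% 2 = (2*b + r*t2) %% 2.
  by rewrite -(modn_dvdm _ (dvdn_mulr r (dvdnn 2))) E modn_dvdm // dvdn_mulr.
have r2 : r %% 2 = 1 by rewrite modn2 hr.
have et : t1 = t2.
  by case: t1 ht1 E2 {E} => [|[|]] // _; case: t2 ht2 => [|[|]] //; lia.
subst t2; split => //.
move: E => /eqP; rewrite eqn_modDr => /eqP.
rewrite !modn_small; lia.
Qed.

Lemma sgn_mod r s i : 0 < r -> i < r ->
  (if s then 2*i else 2*(r-i)) %% (2*r) = (2 * (if s then i else (r - i) %% r)) %% (2*r).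
Proof.
move=> hr hi; case: s => //.
have [->|i0] := eqVneq i 0.
  by rewrite subn0 !modnn muln0 mod0n.
by rewrite (modn_small (m := r - i)) //; lia.
Qed.

Lemma sum_cl m (V : nat -> nat) : 0 < m ->
  \sum_(i < 2* m+1) V (cl m i) = V 0 + V 1 + V 2 + (m-1) * (V 3 + V 4).
Proof.
move=> hm.
rewrite -(big_mkord xpredT (fun i => V (cl m i))).
rewrite big_ltn; last lia.
rewrite big_ltn; last lia.
have -> : 2* m+1 = (2* m).+1 by lia.
rewrite big_nat_recr /=; last lia.
rewrite (big_cat_nat _ (n:=m.+1)) /=; try lia.
rewrite (eq_big_nat _ _ (F2 := fun=> V 3)); last first.
  by move=> i hi; rewrite /cl; repeat (case: ifP => ?); rewrite //=; lia.
rewrite (eq_big_nat _ _ (m:=m.+1) (n:=2 * m) (F2 := fun=> V 4)); last first.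
  by move=> i hi; rewrite /cl; repeat (case: ifP => ?); rewrite //=; lia.
rewrite !sum_nat_const_nat.
have -> : cl m 0 = 0 by [].
have -> : cl m 1 = 1 by [].
have -> : cl m (2* m) = 2 by rewrite /cl; repeat (case: ifP => ?); rewrite //=; lia.
have -> : m.+1 - 2 = m - 1 by lia.
have -> : 2* m - m.+1 = m - 1 by lia.
rewrite mulnDr; lia.
Qed.

Lemma sum_id n : \sum_(i < n) i * 2 = n * n.-1.
Proof.
elim: n => [|n IH]; first by rewrite big_ord0.
rewrite big_ord_recr /= IH; case: n {IH} => [|n] //=; lia.
Qed.

Lemma natZ0 p n : 1 < p -> p %| n -> (n%:R : 'Z_p)%R = 0%R.
Proof.
move=> hp hd; apply: val_inj; rewrite /= val_Zp_nat //.
by apply/eqP.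
Qed.

Arguments fin1 {c p1 p2}.
Arguments fin2 {c p1 p2}.
Arguments fin3 {c p}.
Arguments fin4 {c k}.
Arguments fin5 {p}.
Arguments N1 {r a b t1 t2}.
Arguments sum_cl {m} V.

Lemma modr r i : i < r -> (r - i) %% r = if i == 0 then 0 else r - i.
Proof.
move=> hi; case: eqP => [->|i0]; first by rewrite subn0 modnn.
by rewrite modn_small //; lia.
Qed.

Local Open Scope ring_scope.

Theorem lemma4p8 (r : nat) (hr3 : (3 <= r)%N) (hodd : odd r) :
  exists A : 'I_2 -> 'M[('Z_(2 * r) * 'Z_8)%type]_(r, 8),
    MRS A /\ is_MRS A 0 0.
Proof.
have [m hm] : exists m, r = (2 * m + 1)%N.
  by exists r./2; rewrite -[r in r = _]odd_double_half hodd; lia.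
subst r. have m1 : (0 < m)%N by lia.
have h2r : (1 < 2 * (2 * m + 1))%N by lia.
have hod : odd (2 * m + 1) by rewrite oddD oddM.
pose A := fun k : 'I_2 => \matrix_(i < 2 * m + 1, j < 8)
   (((Xn m k i j)%:R : 'Z_(2 * (2 * m + 1))), ((Yn m k i j)%:R : 'Z_8)).
suff H : is_MRS A 0 0 by exists A; split => //; exists 0, 0.
have z0 : (0 : 'Z_(2 * (2 * m + 1)) * 'Z_8) = (0, 0) by [].
split; [|split].
- apply: inj_card_bij; last first.
    rewrite !card_prod !card_ord (Zp_cast h2r) (Zp_cast (isT : (1 < 8)%N)); nia.
  move=> [k1 [i1 j1]] [k2 [i2 j2]]; rewrite /= !mxE => -[hx hy].
  move/(congr1 (@nat_of_ord _)): hx; rewrite !val_Zp_nat // => hx.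
  move/(congr1 (@nat_of_ord _)): hy; rewrite !val_Zp_nat // => hy.
  rewrite /Xn /Yn in hx hy.
  set p1 := (8 * k1 + j1)%N in hx hy.
  set p2 := (8 * k2 + j2)%N in hx hy.
  have hp1 : (p1 < 16)%N by rewrite /p1; have := ltn_ord k1; have := ltn_ord j1; lia.
  have hp2 : (p2 < 16)%N by rewrite /p2; have := ltn_ord k2; have := ltn_ord j2; lia.
  have hi1 := ltn_ord i1; have hi2 := ltn_ord i2.
  have [ht1 hy1] := fin3 (cl_lt m i1) hp1.
  have [ht2 hy2] := fin3 (cl_lt m i2) hp2.
  rewrite !modn_small // in hy.
  move: hx.
  rewrite -modnDml sgn_mod; [|lia|lia]; rewrite modnDml.
  rewrite -[in RHS]modnDml sgn_mod; [|lia|lia]; rewrite modnDml => hx.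
  have [||esr et] := N1 hod _ _ ht1 ht2 hx.
  + by case: (sv p1); [|rewrite modr //; case: eqP]; lia.
  + by case: (sv p2); [|rewrite modr //; case: eqP]; lia.
  suff [ei ep] : (i1 = i2 :> nat) /\ p1 = p2.
    have ek : k1 = k2 by apply: ord_inj; move: ep; rewrite /p1 /p2;
      have := ltn_ord j1; have := ltn_ord j2; lia.
    have ej : j1 = j2 by apply: ord_inj; move: ep; rewrite /p1 /p2 ek; lia.
    have ei' : i1 = i2 by apply: ord_inj.
    by rewrite ek ej ei'.
  case: (boolP (sv p1)) esr => s1; case: (boolP (sv p2)) => s2 /= esr.
  + split => //; rewrite esr in et hy.
    exact: fin1 (cl_lt m i2) hp1 hp2 et hy.
  + exfalso; rewrite esr cl_mir // in et hy.
    move: (fin2 (cl_lt m i2) hp2 hp1 (esym et) (esym hy)).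
    by rewrite (negbTE s2) s1.
  + exfalso; rewrite -esr cl_mir // in et hy.
    move: (fin2 (cl_lt m i1) hp1 hp2 et hy).
    by rewrite (negbTE s1) s2.
  + have ei : (i1 = i2 :> nat).
      by move: esr; rewrite !modr //; do 2 case: eqP; lia.
    split => //; rewrite ei in et hy.
    exact: fin1 (cl_lt m i2) hp1 hp2 et hy.
- move=> k i; rewrite sum_pair z0; congr pair.
  + under eq_bigr => j _ do rewrite mxE /=.
    rewrite -natr_sum natZ0 //.
    rewrite /Xn big_split /= -big_distrr /=.
    rewrite (sum8 (fun j => if sv (8 * k + j) then 2 * i else 2 * (2 * m + 1 - i))%N).
    rewrite (sum8 (fun j => tv (cl m i) (8 * k + j))) fin6 //.
    have [he _] := fin4 (cl_lt m i) (ltn_ord k).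
    set S := rs _ in he *.
    have hS := odd_double_half S; rewrite (negbTE he) add0n in hS.
    have hi := ltn_ord i.
    apply/dvdnP; exists (4 + S./2)%N; rewrite -hS; nia.
  + under eq_bigr => j _ do rewrite mxE /=.
    rewrite -natr_sum natZ0 // /Yn (sum8 (fun j => yv (cl m i) (8 * k + j))).
    by have [_ ->] := fin4 (cl_lt m i) (ltn_ord k).
- move=> k j; rewrite sum_pair z0; congr pair.
  + under eq_bigr => i _ do rewrite mxE /=.
    rewrite -natr_sum natZ0 //.
    rewrite /Xn big_split /= -big_distrr /=.
    have hp : (8 * k + j < 16)%N by have := ltn_ord k; have := ltn_ord j; lia.
    rewrite (sum_cl (fun c => tv c (8 * k + j))) //.
    have [he e34 _ _] := fin5 hp.
    set S := (tv 0 _ + _ + _)%N in he *.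
    have hS := odd_double_half S; rewrite (negbTE he) add0n in hS.
    rewrite e34.
    have hid := sum_id (2 * m + 1).
    have hsum : (\sum_(i < 2 * m + 1) (2 * (2 * m + 1 - i)) + \sum_(i < 2 * m + 1) i * 2
        = (2 * m + 1) * (2 * (2 * m + 1)))%N.
      rewrite -big_split /=.
      rewrite (eq_bigr (fun=> (2 * (2 * m + 1))%N)); last first.
        by move=> i _; have := ltn_ord i; lia.
      by rewrite big_const_ord iter_addn_0 mulnC.
    case: (sv _).
    * have -> : (\sum_(i < 2 * m + 1) (2 * i) = \sum_(i < 2 * m + 1) i * 2)%N.
        by apply: eq_bigr => i _; rewrite mulnC.
      rewrite hid; apply/dvdnP; exists (m + S./2 + (m - 1) * tv 4 (8 * k + j))%N.
      rewrite -hS /=; nia.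
    * apply/dvdnP; exists (m + 1 + S./2 + (m - 1) * tv 4 (8 * k + j))%N.
      move: hsum; rewrite hid -hS /=; nia.
  + under eq_bigr => i _ do rewrite mxE /=.
    rewrite -natr_sum natZ0 // /Yn.
    have hp : (8 * k + j < 16)%N by have := ltn_ord k; have := ltn_ord j; lia.
    rewrite (sum_cl (fun c => yv c (8 * k + j))) //.
    have [_ _ h1 h2] := fin5 hp.
    by rewrite dvdn_add // dvdn_mull.
Qed.
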